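(* Let $k$ be a positive integer. Among all real numbers $1\ge a_1\ge a_2\ge\dots\ge a_k\ge0$ with $\sum_{i=1}^k a_i=1$, the value of \[\prod_{i=1}^k\frac{(1+a_i)^{1+a_i}}{a_i^{2a_i}}\] (with the convention $0^0=1$) is maximized when $a_i=\frac1k$ for all $i$. *)

(* Defs.v *)
From Stdlib Require Import Reals Lra.
Open Scope R_scope.

Definition rpow (x y : R) : R :=
  if Req_EM_T x 0 then (if Req_EM_T y 0 then 1 else 0) else Rpower x y.

Definition factor (a : R) : R := rpow (1 + a) (1 + a) / rpow a (2 * a).

Fixpoint prod_factor (k : nat) (a : nat -> R) : R :=
  match k with
  | O => 1
  | S k' => prod_factor k' a * factor (a k')
  end.

Fixpoint sum_to (k : nat) (a : nat -> R) : R :=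
  match k with
  | O => 0
  | S k' => sum_to k' a + a k'
  end.

(* Main.v *)
Require Import Defs.
From Stdlib Require Import Reals.
From Stdlib Require Import Lra Lia Psatz.
From Coquelicot Require Import Coquelicot.
Open Scope R_scope.

Definition Gt (c x : R) : R :=
  (1+c)*ln(1+c) - 2*c*ln c + (ln(1+c) - 2*ln c - 1)*(x-c)
  - ((1+x)*ln(1+x) - 2*x*ln x).

Definition Gt' (c x : R) : R := ln(1+c) - 2*ln c - ln(1+x) + 2*ln x.

Lemma Gt_der c x : 0 < x -> derivable_pt_lim (Gt c) x (Gt' c x).
Proof.
  intros Hx. apply is_derive_Reals. unfold Gt, Gt'.
  auto_derive. lra. field. lra.
Qed.

Lemma Gt'_sign c x : 0 < c -> 0 < x -> (c <= x -> 0 <= Gt' c x) /\ (x <= c -> Gt' c x <= 0).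
Proof.
  intros Hc Hx. unfold Gt'.
  assert (E1 : ln (x*x*(1+c)) = ln x + ln x + ln (1+c)).
  { rewrite ln_mult, ln_mult; try nra; try lra. }
  assert (E2 : ln (c*c*(1+x)) = ln c + ln c + ln (1+x)).
  { rewrite ln_mult, ln_mult; try nra; try lra. }
  split; intro H.
  - assert (0 <= (x-c)*(x+c+c*x)) by (apply Rmult_le_pos; nra).
    assert (ln (c*c*(1+x)) <= ln (x*x*(1+c))). { apply ln_le; nra. } lra.
  - assert (0 <= (c-x)*(x+c+c*x)) by (apply Rmult_le_pos; nra).
    assert (ln (x*x*(1+c)) <= ln (c*c*(1+x))). { apply ln_le; nra. } lra.
Qed.

Lemma Gt_nonneg c x : 0 < c -> 0 < x -> 0 <= Gt c x.
Proof.
  intros Hc Hx.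
  assert (Gc : Gt c c = 0) by (unfold Gt; ring).
  destruct (Rtotal_order x c) as [H|[H|H]].
  - destruct (MVT_cor2 (Gt c) (Gt' c) x c H) as [z [Hz1 Hz2]].
    { intros z Hz. apply Gt_der. lra. }
    destruct (Gt'_sign c z Hc) as [_ S]; [lra|]. specialize (S ltac:(lra)).
    rewrite Gc in Hz1. nra.
  - subst. lra.
  - destruct (MVT_cor2 (Gt c) (Gt' c) c x H) as [z [Hz1 Hz2]].
    { intros z Hz. apply Gt_der. lra. }
    destruct (Gt'_sign c z Hc) as [S _]; [lra|]. specialize (S ltac:(lra)).
    rewrite Gc in Hz1. nra.
Qed.

Lemma exp_le x y : x <= y -> exp x <= exp y.
Proof. intros [H|H]. left; apply exp_increasing; exact H. subst; lra. Qed.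

Definition gc (c : R) := (1+c)*ln(1+c) - 2*c*ln c.
Definition Lc (c x : R) := gc c + (ln(1+c) - 2*ln c - 1)*(x-c).

Lemma factor_pos x : 0 < x -> factor x = exp ((1+x)*ln(1+x) - 2*x*ln x).
Proof.
  intros Hx. unfold factor, rpow.
  destruct (Req_EM_T (1+x) 0); [lra|]. destruct (Req_EM_T x 0); [lra|].
  unfold Rpower. unfold Rminus. rewrite exp_plus, exp_Ropp. unfold Rdiv.
  f_equal; f_equal; f_equal; ring.
Qed.

Lemma factor_bound c x : 0 < c -> 0 <= x -> 0 <= factor x <= exp (Lc c x).
Proof.
  intros Hc Hx. destruct (Req_dec x 0) as [->|Hx0].
  - unfold factor, rpow.
    destruct (Req_EM_T (1+0) 0); [lra|]. destruct (Req_EM_T 0 0); [|lra].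
    destruct (Req_EM_T (2*0) 0); [|lra].
    unfold Rpower. replace (1+0) with 1 by ring. rewrite ln_1.
    replace (exp (1 * 0) / 1) with 1 by (rewrite Rmult_0_r, exp_0; field).
    split; [lra|]. replace 1 with (exp 0) at 1 by apply exp_0.
    apply exp_le. unfold Lc, gc.
    pose proof (Gt_nonneg c 1 Hc ltac:(lra)) as H1.
    (* Lc c 0 >= 0 : use ln(1+c) + c >= 0 directly *)
    assert (0 < ln (1+c)) by (rewrite <- ln_1; apply ln_increasing; lra).
    ring_simplify. lra.
  - rewrite factor_pos by lra. split. left; apply exp_pos.
    apply exp_le. pose proof (Gt_nonneg c x Hc ltac:(lra)) as H. unfold Gt in H.
    unfold Lc, gc. lra.
Qed.

Lemma prod_bound k a c : 0 < c -> (forall i, (i < k)%nat -> 0 <= a i) ->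
  0 <= prod_factor k a <= exp (sum_to k (fun i => Lc c (a i))).
Proof.
  intros Hc. induction k; intros H; simpl.
  - rewrite exp_0. lra.
  - destruct IHk as [I1 I2]. intros i Hi; apply H; lia.
    destruct (factor_bound c (a k) Hc) as [F1 F2]. apply H; lia.
    split. nra. rewrite exp_plus. apply Rmult_le_compat; lra.
Qed.

Lemma sum_L k a c : sum_to k (fun i => Lc c (a i)) =
  INR k * gc c + (ln(1+c) - 2*ln c - 1) * (sum_to k a - INR k * c).
Proof.
  induction k; cbn [sum_to]. simpl; ring. rewrite IHk, S_INR. unfold Lc. ring.
Qed.

Lemma prod_const k c : 0 < c -> prod_factor k (fun _ => c) = exp (INR k * gc c).
Proof.
  intros Hc. induction k; cbn [prod_factor]. simpl; rewrite Rmult_0_l, exp_0. ring.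
  rewrite IHk, factor_pos, S_INR, <- exp_plus by lra. f_equal. unfold gc. ring.
Qed.

Theorem lemma3p8 (k : nat) (a : nat -> R) :
  (0 < k)%nat ->
  a 0%nat <= 1 ->
  (forall i : nat, (i + 1 < k)%nat -> a (S i) <= a i) ->
  0 <= a (k - 1)%nat ->
  sum_to k a = 1 ->
  prod_factor k a <= prod_factor k (fun _ => 1 / INR k).
Proof.
  intros Hk _ Hmono Hlast Hsum.
  assert (Hnn : forall d, (d < k)%nat -> 0 <= a (k - 1 - d)%nat).
  { induction d; intros Hd.
    - replace (k-1-0)%nat with (k-1)%nat by lia. exact Hlast.
    - specialize (IHd ltac:(lia)).
      pose proof (Hmono (k - 1 - S d)%nat ltac:(lia)) as M.
      replace (S (k-1-S d)) with (k-1-d)%nat in M by lia. lra. }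
  assert (Hpos : forall i, (i < k)%nat -> 0 <= a i).
  { intros i Hi. replace i with (k - 1 - (k - 1 - i))%nat by lia. apply Hnn. lia. }
  assert (Hkr : 0 < INR k) by (apply lt_0_INR; lia).
  set (c := 1 / INR k).
  assert (Hc : 0 < c) by (unfold c; apply Rdiv_lt_0_compat; lra).
  destruct (prod_bound k a c Hc Hpos) as [_ B].
  rewrite sum_L, Hsum in B.
  replace (INR k * c) with 1 in B by (unfold c; field; lra).
  rewrite prod_const by exact Hc.
  replace (INR k * gc c + (ln (1 + c) - 2 * ln c - 1) * (1 - 1)) with (INR k * gc c) in B by ring.
  exact B.
Qed.
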